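(* Let $M\ge1$, let $k\in\mathfrak{L}_M$, set $u=\min\{\mathbb{1},\tilde{k}\}$, and let $b\in\mathbb{Z}^{M+1}$ with $u\leq b\leq\min\{k,\tilde{k}\}$. Then \[ \#\left\{\mathsf{p}\in\mathsf{S}_M\,|\,(\kappa(\mathsf{p}),\beta(\mathsf{p}))=(k,b)\right\}=\binom{k}{b}\binom{\tilde{k}-u}{b-u}. \]
   Context: Fix depths $z_{-1}<z_0<\cdots<z_M$. A (reflection) scattering sequence is a finite sequence $\mathsf{p}=(\mathsf{p}_0,\ldots,\mathsf{p}_L)$ with $L\geq 2$, $\mathsf{p}_0=\mathsf{p}_L=z_{-1}$, $\mathsf{p}_i\in\{z_0,\ldots,z_M\}$ for $1\le i\le L-1$, and for every $0\le i\le L-1$ there is $-1\le j\le M-1$ with $\{\mathsf{p}_i,\mathsf{p}_{i+1}\}=\{z_j,z_{j+1}\}$; $\mathsf{S}_M$ is the set of these. For $0\le n\le M$, $k_n$ is the number of maximal runs of consecutive indices $i$ with $\mathsf{p}_i\in\{z_n,\ldots,z_M\}$, and $b_n$ the number of those runs of length at least 2; $\kappa(\mathsf{p})=(k_0,\ldots,k_M)$, $\beta(\mathsf{p})=(b_0,\ldots,b_M)$. $\mathfrak{L}_M=\{(k_0,\ldots,k_M)\in\mathbb{Z}_{\ge0}^{M+1}: k_0=1\text{ and for all }n\le M-1,\ k_n=0\Rightarrow k_{n+1}=0\}$. Notation: $\tilde{k}=(k_1,\ldots,k_M,0)$; $\mathbb{1}=(1,\ldots,1)$; $\min$, $\le$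 and subtraction entrywise; $\binom{x}{y}=\prod_{n=0}^M\binom{x_n}{y_n}$. *)

(* Defs.v *)
From mathcomp Require Import all_boot.
Set Implicit Arguments. Unset Strict Implicit. Unset Printing Implicit Defensive.

(* Depths z_{-1} < z_0 < ... < z_M are encoded by their index shifted by one:
   z_j  <->  j.+1  (so z_{-1} <-> 0, z_M <-> M.+1).  Since the depths are
   strictly increasing this is an order-preserving bijection, and every notion
   below depends only on the indices. *)

Definition scattering_seq (M : nat) (p : seq nat) : Prop :=
  [/\ 3 <= size p,
      nth 0 p 0 = 0,
      nth 0 p (size p).-1 = 0,
      (forall i, 0 < i < (size p).-1 -> 1 <= nth 0 p i <= M.+1) &
      (forall i, i < (size p).-1 ->
         exists j, j < M.+1 /\
           ((nth 0 p i = j /\ nth 0 p i.+1 = j.+1) \/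
            (nth 0 p i = j.+1 /\ nth 0 p i.+1 = j)))].

Fixpoint runs_aux (cur : nat) (s : seq bool) : seq nat :=
  match s with
  | [::] => if 0 < cur then [:: cur] else [::]
  | true :: s' => runs_aux cur.+1 s'
  | false :: s' => if 0 < cur then cur :: runs_aux 0 s' else runs_aux 0 s'
  end.
Definition runs (s : seq bool) : seq nat := runs_aux 0 s.

(* indicator of p_i \in {z_n,...,z_M}, i.e. shifted index >= n.+1 *)
Definition above (n : nat) (p : seq nat) : seq bool := [seq n.+1 <= x | x <- p].

Definition k_of (n : nat) (p : seq nat) : nat := size (runs (above n p)).
Definition b_of (n : nat) (p : seq nat) : nat :=
  count (fun l => 2 <= l) (runs (above n p)).

Definition kappa (M : nat) (p : seq nat) : seq nat := [seq k_of n p | n <- iota 0 M.+1].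
Definition beta (M : nat) (p : seq nat) : seq nat := [seq b_of n p | n <- iota 0 M.+1].

(* The set frak L_M, vectors as seqs of length M+1 indexed 0..M. *)
Definition in_LM (M : nat) (k : seq nat) : Prop :=
  [/\ size k = M.+1, nth 0 k 0 = 1 &
      forall n, n < M -> nth 0 k n = 0 -> nth 0 k n.+1 = 0].

Definition ktilde (k : seq nat) : seq nat := rcons (behead k) 0.

Definition le_vec (s t : seq nat) : bool := all2 leq s t.
Definition min_vec (s t : seq nat) : seq nat := [seq minn x.1 x.2 | x <- zip s t].
Definition sub_vec (s t : seq nat) : seq nat := [seq x.1 - x.2 | x <- zip s t].
Definition ones (M : nat) : seq nat := nseq M.+1 1.

Definition binom_vec (x y : seq nat) : nat := \prod_(xy <- zip x y) 'C(xy.1, xy.2).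

(* Main.v *)
Require Import Defs.
From mathcomp Require Import all_boot.
Set Implicit Arguments. Unset Strict Implicit. Unset Printing Implicit Defensive.


Lemma mem_map_cons (T : eqType) (x y : T) s l :
  (x :: s \in [seq y :: t | t <- l]) = (x == y) && (s \in l).
Proof.
apply/mapP/andP => [[t tl [-> ->]]|[/eqP -> sl]]; last by exists s.
by [].
Qed.

Lemma nil_notin_map_cons (T : eqType) (y : T) l : ([::] \in [seq y :: t | t <- l]) = false.
Proof. by apply/mapP => -[]. Qed.

Fixpoint masks (a b : nat) : seq bitseq :=
  match a with
  | 0 => if b == 0 then [:: [::]] else [::]
  | a'.+1 => match b with
             | 0 => [seq false :: s | s <- masks a' 0]
             | b'.+1 => [seq true :: s | s <- masks a' b'] ++ [seq false :: s | s <- masks a' b]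
             end
  end.

Lemma masksP a b s : s \in masks a b = (size s == a) && (count id s == b).
Proof.
elim: a b s => [|a IH] b s /=.
  by case: b => [|b]; case: s => [|x s] //=; rewrite ?inE //; case: x.
case: s => [|x s]; first by case: b => [|b]; rewrite ?mem_cat !nil_notin_map_cons.
case: b => [|b]; rewrite ?mem_cat !mem_map_cons ?IH /=; case: x => /=.
all: by rewrite ?eqSS ?add1n ?add0n ?eqSS ?andbF ?orbF.
Qed.

Lemma masks_uniq a b : uniq (masks a b).
Proof.
elim: a b => [|a IH] [|b] //=; rewrite ?map_inj_uniq //; try by move=> x y [].
rewrite cat_uniq !map_inj_uniq ?IH //=; try by move=> x y [].
rewrite andbT; apply/hasPn => x /mapP [y _ ->]; by rewrite mem_map_cons.
Qed.

Lemma size_masks a b : size (masks a b) = 'C(a, b).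
Proof.
elim: a b => [|a IH] [|b] //=; rewrite ?size_map ?size_cat ?size_map ?IH ?bin0 //.
by rewrite binS addnC.
Qed.


Definition incrh (p : seq nat) := if p is x :: p' then x.+1 :: p' else [::].

Fixpoint poscomps (m b : nat) : seq (seq nat) :=
  match m, b with
  | 0, 0 => [:: [::]]
  | 0, _.+1 => [::]
  | _.+1, 0 => [::]
  | m'.+1, b'.+1 => [seq 1 :: p | p <- poscomps m' b'] ++ [seq incrh p | p <- poscomps m' b]
  end.

Definition posc m b (p : seq nat) := [&& all (fun x => 0 < x) p, size p == b & sumn p == m].

Lemma mem_map_incrh x p l : (x :: p \in [seq incrh q | q <- l]) = (0 < x) && (x.-1 :: p \in l).
Proof.
apply/mapP/andP => [[[|y q] ql //= [-> ->]] //|[x0 xl]].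
exists (x.-1 :: p) => //=; by rewrite prednK.
Qed.

Lemma nil_notin_map_incrh l : ([::] \in [seq incrh q | q <- l]) = ([::] \in l).
Proof. apply/mapP/idP => [[[|y q] ql //]|nl]; by [exists [::]]. Qed.

Lemma poscompsP m b p : (p \in poscomps m b) = posc m b p.
Proof.
rewrite /posc; elim: m b p => [|m IH] [|b] [|x p] //=; rewrite ?inE //=.
- by rewrite andbF.
- by case: x => [|x] //=; rewrite addSn !andbF.
- by rewrite andbF.
- by rewrite mem_cat nil_notin_map_cons nil_notin_map_incrh IH.
rewrite mem_cat mem_map_cons mem_map_incrh !IH /=.
case: x => [|[|x]] //=; by rewrite orbF add1n !eqSS.
Qed.

Lemma poscomps_uniq m b : uniq (poscomps m b).
Proof.
elim: m b => [|m IH] [|b] //=.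
rewrite cat_uniq map_inj_uniq ?IH //=; last by move=> x y [].
rewrite map_inj_in_uniq ?IH ?andbT; last first.
  move=> [|x q] [|y r]; rewrite !poscompsP //= /posc //=.
  by move=> _ _ [-> ->].
apply/hasPn => z /mapP [q qin ->].
case: q qin => [|y q]; first by rewrite poscompsP /posc.
rewrite poscompsP /posc /= => /andP [y0 _].
apply/mapP => -[r _ [e _]]; by move: y0; rewrite e.
Qed.

Lemma size_poscomps0 b : size (poscomps 0 b) = (b == 0).
Proof. by case: b. Qed.

Lemma size_poscompsS m b : size (poscomps m.+1 b.+1) = 'C(m, b).
Proof.
elim: m b => [|m IH] b.
  by rewrite /= size_cat !size_map size_poscomps0 addn0 bin0n.
have -> : size (poscomps m.+2 b.+1) = size (poscomps m.+1 b) + size (poscomps m.+1 b.+1).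
  by rewrite [poscomps m.+2 _]/= size_cat !size_map.
rewrite IH; case: b => [|b]; first by rewrite !bin0.
by rewrite IH binS addnC.
Qed.

Lemma size_poscomps m b : minn 1 m <= b -> size (poscomps m b) = 'C(m - minn 1 m, b - minn 1 m).
Proof.
case: m => [|m]; first by rewrite size_poscomps0 !subn0 bin0n.
have -> : minn 1 m.+1 = 1 by apply/minn_idPl.
case: b => [|b] // _. by rewrite size_poscompsS !subn1.
Qed.

Fixpoint fill (sg : bitseq) (p : seq nat) : seq nat :=
  match sg with
  | [::] => [::]
  | true :: sg' => head 0 p :: fill sg' (behead p)
  | false :: sg' => 0 :: fill sg' p
  end.

Definition pos (x : nat) := 0 < x.

Lemma size_fill sg p : size (fill sg p) = size sg.
Proof. by elim: sg p => [|[] sg IH] p //=; rewrite IH. Qed.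

Lemma fill_map_pos sg p : count id sg = size p -> all pos p ->
  map pos (fill sg p) = sg.
Proof.
elim: sg p => [|[] sg IH] p //=.
  case: p => [|x p] //= [e] /andP [px ap]. by rewrite IH // px.
by move=> e ap; rewrite IH.
Qed.

Lemma fill_filter_pos sg p : count id sg = size p -> all pos p ->
  filter pos (fill sg p) = p.
Proof.
elim: sg p => [|[] sg IH] p //=.
  by case: p.
  case: p => [|x p] //= [e] /andP [px ap]. by rewrite px IH.
by rewrite add0n; apply: IH.
Qed.

Lemma fillK c : fill (map pos c) (filter pos c) = c.
Proof.
elim: c => [|x c IH] //=; rewrite /pos; case: x => [|x] //=; by rewrite IH.
Qed.

Lemma sumn_filter_pos c : sumn (filter pos c) = sumn c.
Proof. elim: c => [|[|x] c IH] //=; by rewrite IH. Qed.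

Definition comps a m b := [seq fill sg p | sg <- masks a b, p <- poscomps m b].

Definition compc a m b (c : seq nat) := [&& size c == a, sumn c == m & count pos c == b].

Lemma compsP a m b c : (c \in comps a m b) = compc a m b c.
Proof.
rewrite /compc; apply/allpairsP/idP => [[[sg p] /= [sgin pin ->]]|].
  move: sgin pin; rewrite masksP poscompsP /posc => /andP [/eqP s1 /eqP c1] /and3P [ap /eqP sp /eqP sm].
  have e : count id sg = size p by rewrite c1 sp.
  rewrite size_fill s1 eqxx /= -sumn_filter_pos fill_filter_pos // sm eqxx /=.
  by rewrite -(count_map pos id) fill_map_pos // c1.
move=> /and3P [/eqP sc /eqP smc /eqP cc].
exists (map pos c, filter pos c) => /=; split; last by rewrite fillK.
  by rewrite masksP size_map sc eqxx count_map cc eqxx.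
rewrite poscompsP /posc filter_all size_filter cc sumn_filter_pos smc !eqxx.
by [].
Qed.

Lemma comps_uniq a m b : uniq (comps a m b).
Proof.
apply: allpairs_uniq; [exact: masks_uniq | exact: poscomps_uniq |].
move=> [s1 p1] [s2 p2] /allpairsP [[x y] /= [xi yi [-> ->]]] /allpairsP [[x' y'] /= [xi' yi' [-> ->]]] /= e.
move: xi yi xi' yi'; rewrite !masksP !poscompsP /posc.
move=> /andP [_ /eqP c1] /and3P [a1 /eqP z1 _] /andP [_ /eqP c2] /and3P [a2 /eqP z2 _].
have h1 : count id x = size y by rewrite c1 z1.
have h2 : count id x' = size y' by rewrite c2 z2.
have := fill_map_pos h1 a1; have := fill_filter_pos h1 a1.
by rewrite e fill_map_pos // fill_filter_pos // => -> ->.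
Qed.

Lemma size_comps a m b : minn 1 m <= b ->
  size (comps a m b) = 'C(a, b) * 'C(m - minn 1 m, b - minn 1 m).
Proof. by move=> h; rewrite size_allpairs size_masks size_poscomps. Qed.


Lemma runs_aux_cat c s t :
  runs_aux c (s ++ false :: t) = runs_aux c s ++ runs_aux 0 t.
Proof.
elim: s c => [|[] s IH] c /=; first by case: ifP.
  by rewrite IH.
by case: ifP => _; rewrite IH.
Qed.

Lemma runs_cat s t : runs (s ++ false :: t) = runs s ++ runs t.
Proof. exact: runs_aux_cat. Qed.

Lemma runs_falseR s : runs (s ++ [:: false]) = runs s.
Proof. by rewrite runs_cat cats0. Qed.

Lemma runs_aux_nseq c n : runs_aux c (nseq n true) = if 0 < c + n then [:: c + n] else [::].
Proof. by elim: n c => [|n IH] c /=; [rewrite addn0 | rewrite IH addSnnS]. Qed.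

Definition stepr (x y : nat) := (y == x.+1) || (x == y.+1).
Definition walk (t : seq nat) := path stepr 0 (t ++ [:: 0]).
Definition inr M (x : nat) := 0 < x <= M.+1.
Definition isD M t := [&& t != [::], all (inr M) t & walk t].
Definition g (cs : seq (seq nat)) := flatten [seq map succn c ++ [:: 1] | c <- cs].
Definition build cs := 1 :: g cs.

Lemma g_cons c cs : g (c :: cs) = map succn c ++ 1 :: g cs.
Proof. by rewrite /g /= -catA. Qed.

Lemma path_shift x c : path stepr x.+1 (map succn c) = path stepr x c.
Proof. elim: c x => [|y c IH] x //=; by rewrite IH /stepr !eqSS. Qed.

Lemma path_g cs : path stepr 1 (g cs ++ [:: 0]) = all walk cs.
Proof.
elim: cs => [|c cs IH] //=.
rewrite g_cons -catA cat_path /= IH path_shift last_map /walk cat_path /=.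
rewrite /stepr !eqSS !andbT andbA //.
Qed.

Lemma walk_build cs : walk (build cs) = all walk cs.
Proof. by rewrite /walk /= path_g. Qed.

Lemma inr_g M cs : all (all (inr M)) cs -> all (inr M.+1) (g cs).
Proof.
elim: cs => [|c cs IH] //= /andP [hc hcs].
rewrite g_cons all_cat /= IH // andbT all_map.
by apply/allP => x /(allP hc); rewrite /inr /= ltnS => /andP [_ ->].
Qed.

Lemma isD_build M cs : all (isD M) cs -> isD M.+1 (build cs).
Proof.
move=> h; rewrite /isD /= walk_build inr_g ?andbT.
  by apply/allP => c /(allP h) /and3P [].
by apply/allP => c /(allP h) /and3P [].
Qed.

Lemma path_split x s y t : path stepr x (s ++ y :: t) = path stepr x (s ++ [:: y]) && path stepr y t.
Proof. by rewrite -cat1s catA cat_path cats1 last_rcons. Qed.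

Lemma parse_g M n w : size w <= n -> all (inr M.+1) w -> path stepr 1 w -> last 1 w = 1 ->
  exists2 cs, all (isD M) cs & w = g cs.
Proof.
elim: n w => [|n IH] w.
  by case: w => // _ _ _ _; exists [::].
case: w => [|x w']; first by move=> *; exists [::].
set w := x :: w' => sw aw pw lw.
have w1 : 1 \in w by rewrite -{1}lw /w /= mem_last.
set i := index 1 w.
have ilt : i < size w by rewrite index_mem.
have ni : nth 0 w i = 1 by exact: nth_index.
have ew : w = take i w ++ 1 :: drop i.+1 w.
  by rewrite -[X in _ ++ X :: _]ni -drop_nth // cat_take_drop.
set e := take i w in ew; set w'' := drop i.+1 w in ew.
have se : size e = i by rewrite size_take ilt.
have n1e : 1 \notin e.
  apply/negP => h; have : index 1 w < i.
    by rewrite {1}ew index_cat h -se index_mem.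
  by rewrite ltnn.
have x2 : x = 2.
  move: pw aw; rewrite /= /stepr => /andP [/orP [/eqP -> //|/eqP [x0]] _].
  by rewrite -x0 /= /inr.
have ine : i != 0 by rewrite /i /= x2.
have ae : all (fun y => 1 < y <= M.+2) e.
  apply/allP => y ye; have := allP aw y (mem_take ye); rewrite /inr => /andP [y0 ->].
  rewrite andbT ltn_neqAle y0 andbT; apply/eqP => y1; by move: n1e; rewrite y1 ye.
set c := map predn e.
have ce : map succn c = e.
  rewrite -map_comp; rewrite -[RHS]map_id; apply/eq_in_map => y /(allP ae) /andP [y1 _].
  by rewrite /= prednK // ltnW.
move: pw; rewrite ew path_split => /andP [pe pw''].
have [cs acs ecs] : exists2 cs, all (isD M) cs & w'' = g cs.
  apply: IH.
  - have : size w = size e + (size w'').+1 by rewrite {1}ew size_cat.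
    move: sw; rewrite -/w => sw hs; move: sw; rewrite hs addnS ltnS => h.
    exact: leq_trans (leq_addl _ _) h.
  - apply/allP => y yw; apply: (allP aw); exact: (mem_drop yw).
  - exact: pw''.
  - by move: lw; rewrite ew last_cat /=.
exists (c :: cs); last by rewrite g_cons ce ecs.
rewrite /= acs andbT /isD.
apply/and3P; split.
- by rewrite /c -size_eq0 size_map se.
- apply/allP => y /mapP [z /(allP ae) /andP [z1 z2] ->].
  by rewrite /inr -ltnS prednK ?(ltnW z1) // z1 -ltnS prednK ?(ltnW z1).
- by rewrite /walk -path_shift map_cat ce.
Qed.

Lemma parse M t : isD M.+1 t -> exists2 cs, all (isD M) cs & t = build cs.
Proof.
case: t => [|x w] //; rewrite /isD /walk /= => /and3P [/andP [ax aw] sx pw].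
have x1 : x = 1.
  by move: sx; rewrite /stepr => /orP [/eqP ->|].
subst x.
move: pw; rewrite cat_path /= andbT => /andP [pw lw].
have lw1 : last 1 w = 1.
  by move: lw; rewrite /stepr => /orP [|/eqP ->].
have [cs acs ->] := parse_g (leqnn (size w)) aw pw lw1.
by exists cs.
Qed.

Lemma cat1_inj (s1 s2 t1 t2 : seq nat) : 1 \notin s1 -> 1 \notin s2 ->
  s1 ++ 1 :: t1 = s2 ++ 1 :: t2 -> s1 = s2 /\ t1 = t2.
Proof.
elim: s1 s2 => [|x s1 IH] [|y s2] //=.
- by move=> _ _ [->].
- move=> _; rewrite inE => /norP [/negP y1 _] [e _]; by case: y1; rewrite e.
- rewrite inE => /norP [/negP y1 _] _ [e _]; by case: y1; rewrite e.
rewrite !inE => /norP [_ h1] /norP [_ h2] [-> e].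
by have [-> ->] := IH _ h1 h2 e.
Qed.

Lemma g_inj cs1 cs2 : all (all pos) cs1 -> all (all pos) cs2 -> g cs1 = g cs2 -> cs1 = cs2.
Proof.
have n1 c : all pos c -> 1 \notin map succn c.
  move=> h; apply/mapP => -[x /(allP h) x0 [e]]; by move: x0; rewrite /pos -e.
elim: cs1 cs2 => [|c1 cs1 IH] [|c2 cs2] //=.
- by rewrite g_cons; case: (map succn c2).
- by rewrite g_cons; case: (map succn c1).
move=> /andP [a1 b1] /andP [a2 b2]; rewrite !g_cons => e.
have [e1 e2] := cat1_inj (n1 _ a1) (n1 _ a2) e.
by rewrite (IH _ b1 b2 e2) (inj_map succn_inj e1).
Qed.

Lemma isD_pos M t : isD M t -> all pos t.
Proof. by move=> /and3P [_ h _]; apply/allP => x /(allP h) /andP []. Qed.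

Lemma build_inj M cs1 cs2 : all (isD M) cs1 -> all (isD M) cs2 -> build cs1 = build cs2 -> cs1 = cs2.
Proof.
move=> h1 h2 [e]; apply: g_inj e.
  by apply/allP => c /(allP h1) /isD_pos.
by apply/allP => c /(allP h2) /isD_pos.
Qed.


Lemma above_shift n c : above n.+1 (map succn c) = above n c.
Proof. by rewrite /above -map_comp. Qed.

Lemma runs_above_g n cs : runs (above n.+1 (g cs)) = flatten [seq runs (above n c) | c <- cs].
Proof.
elim: cs => [|c cs IH] //=.
by rewrite g_cons /above map_cat /= -/(above _ _) -/(above _ _) above_shift runs_cat IH.
Qed.

Lemma k_of_build n cs : k_of n.+1 (build cs) = sumn [seq k_of n c | c <- cs].
Proof.
rewrite /k_of; change (size (runs (above n.+1 (g cs))) = sumn [seq size (runs (above n c)) | c <- cs]).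
by rewrite runs_above_g size_flatten /shape -map_comp.
Qed.

Lemma b_of_build n cs : b_of n.+1 (build cs) = sumn [seq b_of n c | c <- cs].
Proof.
rewrite /b_of; change (count (fun l => 2 <= l) (runs (above n.+1 (g cs))) = sumn [seq count (fun l => 2 <= l) (runs (above n c)) | c <- cs]).
by rewrite runs_above_g count_flatten -map_comp.
Qed.

Lemma above0 t : all pos t -> above 0 t = nseq (size t) true.
Proof. elim: t => [|x t IH] //= /andP [px ht]; rewrite /above /= -/(above 0 t) IH //; by rewrite -[1 <= x]/(pos x) px. Qed.

Lemma k_of0 t : t != [::] -> all pos t -> k_of 0 t = 1.
Proof.
move=> t0 /above0; rewrite /k_of => ->; rewrite /runs runs_aux_nseq add0n lt0n size_eq0 t0.
by [].
Qed.

Lemma b_of0 t : all pos t -> b_of 0 t = (1 < size t).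
Proof.
move=> /above0; rewrite /b_of => ->; rewrite /runs runs_aux_nseq add0n.
by case: t => [|x [|y t]].
Qed.

Lemma build_pos cs : all pos (build cs).
Proof.
rewrite /build /= /g; elim: cs => [|c cs IH] //=.
rewrite all_cat IH andbT all_cat /= andbT all_map; by apply/allP.
Qed.

Lemma k_of_build0 cs : k_of 0 (build cs) = 1.
Proof. by rewrite k_of0 // build_pos. Qed.

Lemma b_of_build0 cs : b_of 0 (build cs) = (cs != [::]).
Proof. by rewrite b_of0 ?build_pos //; case: cs => [|c cs] //=; rewrite g_cons size_cat addnS. Qed.

Definition KF n (F : seq (seq nat)) := sumn [seq k_of n t | t <- F].
Definition BF n (F : seq (seq nat)) := sumn [seq b_of n t | t <- F].
Definition kv M F := [seq KF n F | n <- iota 0 M.+1].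
Definition bv M F := [seq BF n F | n <- iota 0 M.+1].

Lemma KF_build n css : KF n.+1 (map build css) = KF n (flatten css).
Proof.
rewrite /KF -map_comp (eq_map (fun cs => k_of_build n cs)) map_flatten sumn_flatten.
by rewrite -map_comp.
Qed.

Lemma BF_build n css : BF n.+1 (map build css) = BF n (flatten css).
Proof.
rewrite /BF -map_comp (eq_map (fun cs => b_of_build n cs)) map_flatten sumn_flatten.
by rewrite -map_comp.
Qed.

Lemma KF_build0 css : KF 0 (map build css) = size css.
Proof. rewrite /KF -map_comp (eq_map k_of_build0); by elim: css => //= c css ->. Qed.

Lemma BF_build0 css : BF 0 (map build css) = count (fun cs => cs != [::]) css.
Proof. by rewrite /BF -map_comp (eq_map b_of_build0) /= sumn_count. Qed.

Lemma map_iotaS (f : nat -> nat) M : [seq f n | n <- iota 0 M.+1] = f 0 :: [seq f n.+1 | n <- iota 0 M].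
Proof. by rewrite /= -(addn0 1) iotaDl -map_comp. Qed.

Lemma kv_build M css : kv M.+1 (map build css) = size css :: kv M (flatten css).
Proof. by rewrite /kv map_iotaS KF_build0; congr (_ :: _); apply: eq_map => n; rewrite KF_build. Qed.

Lemma bv_build M css : bv M.+1 (map build css) = count (fun cs => cs != [::]) css :: bv M (flatten css).
Proof. by rewrite /bv map_iotaS BF_build0; congr (_ :: _); apply: eq_map => n; rewrite BF_build. Qed.

Lemma KF0_isD M G : all (isD M) G -> KF 0 G = size G.
Proof.
elim: G => [|t G IH] //= /andP [/and3P [t0 ht wt] aG].
rewrite /KF /= -/(KF 0 G) IH // k_of0 //; apply/allP => x /(allP ht) /andP []. by [].
Qed.

Lemma isD0 t : isD 0 t = (t == [:: 1]).
Proof.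
rewrite /isD /walk /inr; case: t => [|x [|y t]] //=.
  by case: x => [|[|x]] //=; rewrite /stepr /= ?andbF.
by case: x => [|[|x]] //=; case: y => [|[|y]] //=; rewrite ?andbF.
Qed.


Fixpoint forests (M : nat) (k b : seq nat) : seq (seq (seq nat)) :=
  match M with
  | 0 => if (b == [:: 0]) && (size k == 1) then [:: nseq (head 0 k) [:: 1]] else [::]
  | M'.+1 => [seq map build (reshape c G) | c <- comps (head 0 k) (head 0 (behead k)) (head 0 b),
                                            G <- forests M' (behead k) (behead b)]
  end.

Lemma BF0_nseq a : BF 0 (nseq a [:: 1]) = 0.
Proof. by elim: a. Qed.

Lemma count_shape (css : seq (seq (seq nat))) : count pos (shape css) = count (fun cs => cs != [::]) css.
Proof. by rewrite /shape count_map; apply: eq_count => cs; rewrite /pos /= lt0n size_eq0. Qed.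

Lemma parse_all M F : all (isD M.+1) F ->
  exists css, F = map build css /\ all (all (isD M)) css.
Proof.
elim: F => [|t F IH] /=; first by exists [::].
move=> /andP [/parse [cs hcs ->] /IH [css [-> h]]].
by exists (cs :: css); rewrite /= hcs h.
Qed.

Lemma all_flattenP T (P : pred T) ss : all P (flatten ss) = all (all P) ss.
Proof. by elim: ss => //= s ss IH; rewrite all_cat IH. Qed.

Lemma kv_head M F : kv M F = KF 0 F :: behead (kv M F).
Proof. by rewrite /kv map_iotaS. Qed.

Lemma forestsP M k b F : F \in forests M k b <-> (all (isD M) F /\ kv M F = k /\ bv M F = b).
Proof.
elim: M k b F => [|M IH] k b F.
  rewrite /=; split.
    case: ifP => // /andP [/eqP -> /eqP sk]; rewrite inE => /eqP ->.
    split; first by apply/allP => t /nseqP [-> _]; rewrite isD0.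
    rewrite /kv /bv /= BF0_nseq (@KF0_isD 0) ?size_nseq; last first.
      by apply/allP => t /nseqP [-> _]; rewrite isD0.
    by case: k sk => [|x [|y k]].
  move=> [hF [<- <-]].
  have /all_pred1P eF : all (pred1 [:: 1]) F.
    by apply/allP => t /(allP hF); rewrite isD0.
  rewrite /kv /bv /= (KF0_isD hF) eF BF0_nseq /= size_nseq inE.
  by [].
split.
  move=> /allpairsP [[c G] /= [cin /IH [hG [kG bG]] ->]].
  move: cin; rewrite compsP /compc => /and3P [/eqP sc /eqP smc /eqP cc].
  have sG : size G = sumn c.
    by rewrite smc -kG -(KF0_isD hG) kv_head.
  have fl : flatten (reshape c G) = G by rewrite reshapeKr // sG.
  have sh : shape (reshape c G) = c by rewrite reshapeKl // sG.
  have k0 : k != [::] by move: kG; case: (k) => //; rewrite /kv map_iotaS.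
  have b0 : b != [::] by move: bG; case: (b) => //; rewrite /bv map_iotaS.
  split; last split.
  - apply/allP => t /mapP [cs csin ->]; apply: isD_build.
    apply/allP => x xcs; apply: (allP hG); rewrite -fl.
    by apply/flattenP; exists cs.
  - rewrite kv_build fl kG size_reshape sc.
    by case: (k) k0.
  - rewrite bv_build fl bG -count_shape sh cc.
    by case: (b) b0.
move=> [hF [kF bF]].
have [css [eF hcss]] := parse_all hF.
apply/allpairsP; exists (shape css, flatten css) => /=; split; last by rewrite flattenK.
- rewrite compsP /compc count_shape -bF -kF eF kv_build bv_build /= size_map eqxx /=.
  by rewrite -size_flatten (KF0_isD (M := M)) ?all_flattenP // !eqxx.
- apply (IH _ _ _).2; split; first by rewrite all_flattenP.
  by rewrite -kF -bF eF kv_build bv_build.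
Qed.


Lemma map_build_inj M css1 css2 : all (all (isD M)) css1 -> all (all (isD M)) css2 ->
  map build css1 = map build css2 -> css1 = css2.
Proof.
elim: css1 css2 => [|c1 css1 IH] [|c2 css2] //= /andP [h1 h1'] /andP [h2 h2'] [e e'].
by rewrite (build_inj h1 h2 (f_equal (cons 1) e)) (IH _ h1' h2' e').
Qed.

Lemma forest_data M k b c G : c \in comps (head 0 k) (head 0 (behead k)) (head 0 b) ->
  G \in forests M (behead k) (behead b) ->
  [/\ flatten (reshape c G) = G, shape (reshape c G) = c & all (all (isD M)) (reshape c G)].
Proof.
rewrite compsP /compc => /and3P [/eqP sc /eqP smc /eqP cc] /forestsP [hG [kG bG]].
have sG : size G = sumn c by rewrite smc -kG -(KF0_isD hG) kv_head.
have fl : flatten (reshape c G) = G by rewrite reshapeKr // sG.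
split => //; first by rewrite reshapeKl // sG.
by rewrite -all_flattenP fl.
Qed.

Lemma forests_uniq M k b : uniq (forests M k b).
Proof.
elim: M k b => [|M IH] k b /=; first by case: ifP.
apply: allpairs_uniq; [exact: comps_uniq | exact: IH |].
move=> [c1 G1] [c2 G2] /allpairsP [[x y] /= [xi yi [-> ->]]] /allpairsP [[x' y'] /= [xi' yi' [-> ->]]] /= e.
have [f1 s1 a1] := forest_data xi yi.
have [f2 s2 a2] := forest_data xi' yi'.
have e2 := map_build_inj a1 a2 e.
have := f_equal shape e2; have := f_equal flatten e2; by rewrite f1 f2 s1 s2 => -> ->.
Qed.

Definition target M k b :=
  binom_vec k b * binom_vec (sub_vec (ktilde k) (min_vec (ones M) (ktilde k)))
                            (sub_vec b (min_vec (ones M) (ktilde k))).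

Lemma binom_vec_cons x xs y ys : binom_vec (x :: xs) (y :: ys) = 'C(x, y) * binom_vec xs ys.
Proof. by rewrite /binom_vec /= big_cons. Qed.

Lemma size_forests M k b : size k = M.+1 -> size b = M.+1 ->
  le_vec (min_vec (ones M) (ktilde k)) b -> size (forests M k b) = target M k b.
Proof.
elim: M k b => [|M IH] [|k0 ks] [|b0 bs] //=.
  case: ks => [|? ?] //; case: bs => [|? ?] // _ _ _.
  rewrite /target /ktilde /= /min_vec /sub_vec /= !binom_vec_cons /binom_vec /= !big_nil.
  rewrite minn0 !subn0 bin0n muln1; case: b0 => [|b0] //=.
  by rewrite bin0.
  by rewrite mul0n muln0.
case: ks => [|k1 ks] //= [sk] [sb].
rewrite /le_vec /= => /andP [hb hl].
rewrite size_allpairs size_comps // IH //=; last by rewrite sk.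
rewrite /target.
change ('C(k0, b0) * 'C(k1 - minn 1 k1, b0 - minn 1 k1) * (binom_vec (k1 :: ks) bs * binom_vec (sub_vec (ktilde (k1::ks)) (min_vec (ones M) (ktilde (k1::ks)))) (sub_vec bs (min_vec (ones M) (ktilde (k1::ks))))) = binom_vec (k0 :: k1 :: ks) (b0 :: bs) * binom_vec ((k1 - minn 1 k1) :: sub_vec (ktilde (k1::ks)) (min_vec (ones M) (ktilde (k1::ks)))) ((b0 - minn 1 k1) :: sub_vec bs (min_vec (ones M) (ktilde (k1::ks))))).
rewrite !binom_vec_cons -!mulnA; congr (_ * _); by rewrite mulnCA.
Qed.


Lemma scatP M p : scattering_seq M p <-> exists2 t, isD M t & p = 0 :: t ++ [:: 0].
Proof.
split.
  case=> sp p0 pl pin pst.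
  case: p sp p0 pl pin pst => [|x p'] // sp /= x0; subst x.
  case/lastP: p' sp => [|t y] // sp; rewrite size_rcons /= nth_rcons ltnn eqxx => y0; subst y.
  rewrite -cats1 => pin pst; exists t => //.
  rewrite /isD; apply/and3P; split.
  - by case: (t) sp.
  - apply/(all_nthP 0) => j jt; have := pin j.+1; rewrite [j.+1 < _]ltnS jt /= nth_cat jt.
    by move=> /(_ isT).
  - rewrite /walk; apply/(pathP 0) => i; rewrite size_cat /= addn1 => it.
    have [j [_ /= [[-> ->]|[-> ->]]]] := pst i it; by rewrite /stepr eqxx ?orbT.
move=> [t /and3P [t0 hat wt] ->].
have bnd : forall i, nth 0 (0 :: t ++ [:: 0]) i <= M.+1.
  move=> i; case: (ltnP i (size (0 :: t ++ [:: 0]))) => hi; last by rewrite nth_default.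
  have := mem_nth 0 hi; rewrite inE mem_cat inE => /orP [/eqP -> //|/orP [/(allP hat) /andP [_ ->] //|/eqP -> //]].
split.
- by rewrite /= size_cat /= addn1 !ltnS lt0n size_eq0.
- by [].
- by rewrite /= size_cat /= addn1 /= nth_cat ltnn subnn.
- move=> i /andP [i0]; rewrite /= size_cat /= addn1.
  case: i i0 => [|j] // _; rewrite ltnS => jt /=.
  rewrite nth_cat jt; exact: (allP hat _ (mem_nth 0 jt)).
- move=> i; rewrite /= size_cat /= addn1 => it.
  move/(pathP 0): wt => /(_ i); rewrite size_cat /= addn1 => /(_ it).
  have b1 := bnd i; have b2 := bnd i.+1; move: b1 b2 => /=.
  rewrite /stepr => b1 b2 /orP [/eqP e|/eqP e].
  + exists (nth 0 (0 :: t ++ [:: 0]) i); split; last by left; split.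
    by move: b2; rewrite e ltnS.
  + exists (nth 0 (t ++ [:: 0]) i); split; last by right; split.
    by move: b1; rewrite e ltnS.
Qed.

Lemma k_of_pad n t : k_of n (0 :: t ++ [:: 0]) = k_of n t.
Proof.
rewrite /k_of; change (size (runs (above n (t ++ [:: 0]))) = size (runs (above n t))).
by rewrite /above map_cat -/(above n t) runs_falseR.
Qed.

Lemma b_of_pad n t : b_of n (0 :: t ++ [:: 0]) = b_of n t.
Proof.
rewrite /b_of; change (count (fun l => 2 <= l) (runs (above n (t ++ [:: 0]))) = count (fun l => 2 <= l) (runs (above n t))).
by rewrite /above map_cat -/(above n t) runs_falseR.
Qed.

Lemma kappa_pad M t : kappa M (0 :: t ++ [:: 0]) = kv M [:: t].
Proof. by apply: eq_map => n; rewrite k_of_pad /KF /= addn0. Qed.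

Lemma beta_pad M t : beta M (0 :: t ++ [:: 0]) = bv M [:: t].
Proof. by apply: eq_map => n; rewrite b_of_pad /BF /= addn0. Qed.

Lemma forest_single M k b F : F \in forests M k b -> nth 0 k 0 = 1 ->
  F = [:: head [::] F].
Proof.
move=> /forestsP [hF [kF _]] k1.
have : size F = 1 by rewrite -(KF0_isD hF) -k1 -kF kv_head.
by case: F {hF kF} => [|t [|? ?]].
Qed.

Theorem lemma2 (M : nat) (k b : seq nat) :
  1 <= M ->
  in_LM M k ->
  size b = M.+1 ->
  le_vec (min_vec (ones M) (ktilde k)) b ->
  le_vec b (min_vec k (ktilde k)) ->
  exists s : seq (seq nat),
    [/\ uniq s,
        (forall p, p \in s <-> (scattering_seq M p /\ kappa M p = k /\ beta M p = b)) &
        size s = binom_vec k b *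
                 binom_vec (sub_vec (ktilde k) (min_vec (ones M) (ktilde k)))
                           (sub_vec b (min_vec (ones M) (ktilde k)))].
Proof.
move=> _ [sk k1 _] sb hl _.
exists [seq 0 :: head [::] F ++ [:: 0] | F <- forests M k b]; split.
- have inj : {in forests M k b &, injective (fun F => 0 :: head [::] F ++ [:: 0])}.
    move=> F1 F2 h1 h2.
    have e1 := forest_single h1 k1; have e2 := forest_single h2 k1.
    move=> [e]; rewrite [LHS]e1 [RHS]e2; congr [:: _]; move: e; rewrite !cats1; exact: rcons_injl.
  by rewrite (map_inj_in_uniq inj) forests_uniq.
- move=> p; split.
    move=> /mapP [F hF ->].
    have eF := forest_single hF k1.
    move: hF; rewrite eF => /forestsP [/andP [ht _] [kF bF]].
    split; first by apply/scatP; exists (head [::] F).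
    by rewrite kappa_pad beta_pad kF bF.
  move=> [/scatP [t ht ->] [kp bp]].
  apply/mapP; exists [:: t] => //.
  apply/forestsP; split; first by rewrite /= ht.
  by rewrite -kappa_pad -beta_pad.
- by rewrite size_map size_forests.
Qed.
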